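(* For $i\ge0$ let $P_i(x)=\frac1{i+1}\mathrm{Tr}(x^{i+1})$ on $\mathfrak{gl}_n(\mathbb C)$ and for $\lambda\in\mathbb C$ let $\phi_\lambda(x,y)=\lambda x-y$. Then: (1) for all $i,j\ge0$ and $\lambda,\gamma\in\mathbb C$, $\{P_i\circ\phi_\lambda,P_j\circ\phi_\gamma\}^Q_{\mathcal R}=0$; (2) the Hamiltonian vector field $X^Q_{P_i\circ\phi_\lambda}$, defined by $X^Q_{P_i\circ\phi_\lambda}[K]=\{K,P_i\circ\phi_\lambda\}^Q_{\mathcal R}$, is given at $(x,y)$ by $$X^Q_{P_i\circ\phi_\lambda}(x,y)=-\big[(x,y),\big((R-I)(\lambda x-y)^{i+1},\,(R+I)(\lambda x-y)^{i+1}\big)\big].$$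
   Context: Let $P_+$ be the projection of $\mathfrak{gl}_n(\mathbb C)$ onto the upper triangular matrices (including the diagonal) and $P_-$ onto the strictly lower triangular matrices, $R=P_+-P_-$, and $\mathcal R(x,y)=(R(x-y)+y,R(x-y)+x)$ on $\mathfrak{gl}_n(\mathbb C)\times\mathfrak{gl}_n(\mathbb C)$, which carries the componentwise matrix product and commutator and the form $\langle(x,y),(x',y')\rangle_2=\mathrm{Tr}(xx')-\mathrm{Tr}(yy')$. The quadratic Poisson $\mathcal R$-bracket is $\{F,G\}^Q_{\mathcal R}(X)=\tfrac12\langle[X,\nabla_XF],\mathcal R(X\nabla_XG+\nabla_XG\,X)\rangle_2-\tfrac12\langle[X,\nabla_XG],\mathcal R(X\nabla_XF+\nabla_XF\,X)\rangle_2$ for $X=(x,y)$, gradients w.r.t. $\langle\cdot,\cdot\rangle_2$. A vector field is identified with a $\mathfrak{gl}_n\times\mathfrak{gl}_n$-valued function via $X[K]=\langle X,\nabla K\rangle_2$. *)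

(* Defs.v *)
(* Base field: an arbitrary numClosedFieldType C (models of C;
   the statement is polynomial, so this generalizes the paper's complex numbers). *)
From HB Require Import structures.
From mathcomp Require Import all_boot all_order all_algebra.
Set Implicit Arguments. Unset Strict Implicit. Unset Printing Implicit Defensive.
Import Order.TTheory GRing.Theory Num.Theory.
Local Open Scope ring_scope.

Section Defs.
Variables (C : numClosedFieldType) (n : nat).

Definition mx := 'M[C]_n.
Definition pt := (mx * mx)%type.

Definition Pplus (A : mx) : mx := \matrix_(i, j) (if (i <= j)%N then A i j else 0).
Definition Pminus (A : mx) : mx := \matrix_(i, j) (if (j < i)%N then A i j else 0).
Definition Rop (A : mx) : mx := Pplus A - Pminus A.

Definition calR (X : pt) : pt :=
  (Rop (X.1 - X.2) + X.2, Rop (X.1 - X.2) + X.1).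

Definition padd (X Y : pt) : pt := (X.1 + Y.1, X.2 + Y.2).
Definition pscale (t : C) (X : pt) : pt := (t *: X.1, t *: X.2).
Definition pmul (X Y : pt) : pt := (X.1 *m Y.1, X.2 *m Y.2).
Definition pcomm (X Y : pt) : pt := padd (pmul X Y) (pscale (-1) (pmul Y X)).

Definition form2 (X Y : pt) : C := \tr (X.1 *m Y.1) - \tr (X.2 *m Y.2).

(* Z is the gradient (w.r.t. form2) of F at X: for every direction H,
   t |-> F(X + t H) is a polynomial function of t whose derivative at 0
   (its coefficient of degree 1) equals <Z, H>_2. *)
Definition is_grad (F : pt -> C) (X Z : pt) : Prop :=
  forall H : pt, exists p : {poly C},
    (forall t : C, p.[t] = F (padd X (pscale t H))) /\ p`_1 = form2 Z H.

(* the quadratic bracket evaluated on gradient values A = grad F, B = grad G *)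
Definition QB (X A B : pt) : C :=
  2^-1 * form2 (pcomm X A) (calR (padd (pmul X B) (pmul B X)))
  - 2^-1 * form2 (pcomm X B) (calR (padd (pmul X A) (pmul A X))).

Definition QPB (F G : pt -> C) (X : pt) (v : C) : Prop :=
  exists ZF ZG, is_grad F X ZF /\ is_grad G X ZG /\ v = QB X ZF ZG.

Definition Pfun (i : nat) (x : mx) : C := (i.+1)%:R^-1 * \tr (x ^+ i.+1).

Definition phi (lam : C) (X : pt) : mx := lam *: X.1 - X.2.

Definition Vfield (i : nat) (lam : C) (X : pt) : pt :=
  let w := (phi lam X) ^+ i.+1 in
  pscale (-1) (pcomm X (Rop w - w, Rop w + w)).

End Defs.

(* Main.v *)
Require Import Defs.
From HB Require Import structures.
From mathcomp Require Import all_boot all_order all_algebra.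
From Stdlib Require Import Ring.
Import Order.TTheory GRing.Theory Num.Theory.
Local Open Scope ring_scope.
Section S.
Variables (C : numClosedFieldType) (n : nat).
Local Notation CT := (Algebra.BaseAddMagma.sort (Num_ClosedField__to__Algebra_BaseAddMagma C)).
Lemma Cring : @ring_theory CT (@Algebra.zero (Num_ClosedField__to__Algebra_BaseAddUMagma C)) (@GRing.one (Num_ClosedField__to__GRing_PzSemiRing C))
   (@Algebra.add (Num_ClosedField__to__Algebra_BaseAddMagma C)) (@GRing.mul (Num_ClosedField__to__GRing_PzSemiRing C))
 (fun x y => (@Algebra.add (Num_ClosedField__to__Algebra_BaseAddMagma C)) x (@Algebra.opp (Num_ClosedField__to__Algebra_BaseZmodule C) y)) (@Algebra.opp (Num_ClosedField__to__Algebra_BaseZmodule C)) eq.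
Proof.
split; [exact: add0r|exact: addrC|exact: addrA|exact: mul1r|exact: mulrC|exact: mulrA|exact: mulrDl|by []|exact: subrr].
Qed.
Ltac canon := repeat match goal with
 | |- context [@Algebra.add ?p] => progress change (@Algebra.add p) with (@Algebra.add (Num_ClosedField__to__Algebra_BaseAddMagma C))
 | |- context [@Algebra.opp ?p] => progress change (@Algebra.opp p) with (@Algebra.opp (Num_ClosedField__to__Algebra_BaseZmodule C))
 | |- context [@GRing.mul ?p] => progress change (@GRing.mul p) with (@GRing.mul (Num_ClosedField__to__GRing_PzSemiRing C))
 | |- context [@Algebra.zero ?p] => progress change (@Algebra.zero p) with (@Algebra.zero (Num_ClosedField__to__Algebra_BaseAddUMagma C))
 | |- context [@GRing.one ?p] => progress change (@GRing.one p) with (@GRing.one (Num_ClosedField__to__GRing_PzSemiRing C))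
 | |- context [@mxtrace ?p] => progress change (@mxtrace p) with (@mxtrace (Num_ClosedField__to__Algebra_Nmodule C))
 | |- context [@fun_of_matrix ?T] => progress change (@fun_of_matrix T) with (@fun_of_matrix CT)
 | |- context [@mulmx ?p] => progress change (@mulmx p) with (@mulmx (Num_ClosedField__to__GRing_PzSemiRing C))
 | |- @eq ?T _ _ => progress change T with CT
 end.
Add Ring Cr : Cring.
Ltac cring := rewrite -[LHS]addr0 -[RHS]addr0; canon; ring.

Definition cf k (P : 'M[{poly C}]_n) : 'M[C]_n := \matrix_(i,j) (P i j)`_k.

Lemma cf0M (P Q : 'M[{poly C}]_n) : cf 0 (P *m Q) = cf 0 P *m cf 0 Q.
Proof.
apply/matrixP=> i j; rewrite !mxE coef_sum; apply: eq_bigr => l _.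
by rewrite coef0M !mxE.
Qed.

Lemma cf1M (P Q : 'M[{poly C}]_n) : cf 1 (P *m Q) = cf 0 P *m cf 1 Q + cf 1 P *m cf 0 Q.
Proof.
apply/matrixP=> i j; rewrite !mxE coef_sum -big_split; apply: eq_bigr => l _ /=.
by rewrite coefM !big_ord_recl big_ord0 /= addr0 !mxE.
Qed.

Definition Mp (a b : 'M[C]_n) : 'M[{poly C}]_n :=
  \matrix_(i,j) ((a i j)%:P + (b i j)%:P * 'X).

Fixpoint pw (a b : 'M[C]_n) k := match k with 0 => Mp a b | k'.+1 => pw a b k' *m Mp a b end.

Lemma cf0Mp a b : cf 0 (Mp a b) = a.
Proof. by apply/matrixP=> i j; rewrite !mxE coefD coefC coefMX addr0. Qed.
Lemma cf1Mp a b : cf 1 (Mp a b) = b.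
Proof. by apply/matrixP=> i j; rewrite !mxE coefD coefMX !coefC /= add0r. Qed.

Lemma cf0pw a b k : cf 0 (pw a b k) = a ^+ k.+1.
Proof.
elim: k => [|m IH] /=; first by rewrite cf0Mp expr1.
by rewrite cf0M IH cf0Mp mulmxE -exprSr.
Qed.

Lemma cf1pw a b k N : N *m a = a *m N ->
  \tr (cf 1 (pw a b k) *m N) = k.+1%:R * \tr (a ^+ k *m b *m N).
Proof.
elim: k N => [|m IH] N hN /=; first by rewrite cf1Mp expr0 mul1mx mulr1n mul1r.
rewrite cf1M mulmxDl mxtraceD cf0pw cf1Mp cf0Mp -[cf 1 _ *m a *m N]mulmxA IH; last first.
  by rewrite -mulmxA hN mulmxA.
rewrite !mulmxA.
have -> : \tr (a ^+ m *m b *m a *m N) = \tr (a ^+ m.+1 *m b *m N).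
  by rewrite -mulmxA -hN mulmxA mxtrace_mulC !mulmxA exprS.
by rewrite [m.+2%:R]mulrSr mulrDl mul1r addrC.
Qed.

Definition ev t (P : 'M[{poly C}]_n) : 'M[C]_n := map_mx (horner_eval t) P.

Lemma evM t P Q : ev t (P *m Q) = ev t P *m ev t Q.
Proof. by rewrite /ev map_mxM. Qed.

Lemma evMp t a b : ev t (Mp a b) = a + t *: b.
Proof.
apply/matrixP=> i j; rewrite !mxE /horner_eval hornerD hornerC hornerMX hornerC.
by rewrite mulrC.
Qed.

Lemma evpw t a b k : ev t (pw a b k) = (a + t *: b) ^+ k.+1.
Proof.
elim: k => [|m IH] /=; first by rewrite evMp expr1.
by rewrite evM IH evMp mulmxE -exprSr.
Qed.

Lemma tr_horner t (P : 'M[{poly C}]_n) : (\tr P).[t] = \tr (ev t P).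
Proof. rewrite /mxtrace horner_sum; apply: eq_bigr => i _; by rewrite mxE. Qed.

Lemma tr_coef k (P : 'M[{poly C}]_n) : (\tr P)`_k = \tr (cf k P).
Proof. rewrite /mxtrace coef_sum; apply: eq_bigr => i _; by rewrite mxE. Qed.

Lemma grad_poly (a b : 'M[C]_n) k : exists p : {poly C},
  (forall t, p.[t] = k.+1%:R^-1 * \tr ((a + t *: b) ^+ k.+1)) /\
  p`_1 = \tr (a ^+ k *m b).
Proof.
exists ((k.+1%:R^-1)%:P * \tr (pw a b k)); split.
  by move=> t; rewrite hornerCM tr_horner evpw.
rewrite coefCM tr_coef -[cf 1 _]mulmx1 cf1pw ?mulmx1 ?mul1mx //.
by rewrite mulKf // pnatr_eq0.
Qed.

Lemma trN (A : 'M[C]_n) : \tr (- A) = - \tr A.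
Proof. exact: raddfN. Qed.
Lemma trB (A B : 'M[C]_n) : \tr (A - B) = \tr A - \tr B.
Proof. exact: raddfB. Qed.

Lemma RopD (A B : 'M[C]_n) : Rop (A + B) = Rop A + Rop B.
Proof.
apply/matrixP=> i j; rewrite /Rop /Pplus /Pminus !mxE.
by case: ifP => _; case: ifP => _; cring.
Qed.
Lemma RopZ (c : C) (A : 'M[C]_n) : Rop (c *: A) = c *: Rop A.
Proof.
apply/matrixP=> i j; rewrite /Rop /Pplus /Pminus !mxE.
by case: ifP => _; case: ifP => _; cring.
Qed.
Lemma RopN (A : 'M[C]_n) : Rop (- A) = - Rop A.
Proof. by rewrite -scaleN1r RopZ scaleN1r. Qed.
Lemma RopB (A B : 'M[C]_n) : Rop (A - B) = Rop A - Rop B.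
Proof. by rewrite RopD RopN. Qed.

Lemma half (a b : C) : a = b + b -> 2^-1 * a = b.
Proof. move=> ->; by rewrite -mulr2n -[b *+ 2]mulr_natl mulKf // pnatr_eq0. Qed.

Lemma swap4 (V : zmodType) (A B D E : V) : A - B = D - E -> A - D = B - E.
Proof. move=> h; rewrite -[A](subrK B) h; by rewrite addrAC (addrAC D) subrr add0r addrC. Qed.

Lemma pcommE (X A : pt C n) : pcomm X A = (X.1 *m A.1 - A.1 *m X.1, X.2 *m A.2 - A.2 *m X.2).
Proof. by rewrite /pcomm /padd /pscale /pmul /= !scaleN1r. Qed.

Lemma form2_diag (c P Q : 'M[C]_n) : form2 (c, c) (calR (P, Q)) = \tr (c *m (Q - P)).
Proof. rewrite /form2 /calR; cbn [fst snd]; rewrite !mulmxDr !mulmxN !mxtraceD !trN; cring. Qed.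

Lemma K1c lam (x y u : 'M[C]_n) : (lam *: x - y) *m u = u *m (lam *: x - y) ->
  x *m (lam *: u) - (lam *: u) *m x = y *m u - u *m y.
Proof.
move=> h; rewrite -scalemxAr -scalemxAl -scalerBr scalerBr.
apply: swap4; move: h; by rewrite mulmxBl mulmxBr -scalemxAl -scalemxAr.
Qed.

Lemma anti g (x y v : 'M[C]_n) :
  (y *m v + v *m y) - (x *m (g *: v) + (g *: v) *m x) = - ((g *: x - y) *m v + v *m (g *: x - y)).
Proof.
rewrite mulmxBl mulmxBr -!scalemxAl -!scalemxAr.
by rewrite !opprD !opprK addrACA [- _ + y *m v]addrC [- _ + v *m y]addrC.
Qed.

Lemma gradF i lam (X : pt C n) :
  is_grad (fun Y => Pfun i (phi lam Y)) X (lam *: (phi lam X) ^+ i, (phi lam X) ^+ i).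
Proof.
move=> H; have [p [Hp Hp1]] := grad_poly (phi lam X) (phi lam H) i.
exists p; split.
  move=> t; rewrite Hp /Pfun; congr (_ * \tr (_ ^+ _)).
  rewrite /phi /padd /pscale /=.
  by rewrite [in RHS]scalerDr scalerA [lam * t]mulrC -scalerA opprD [RHS]addrACA scalerBr.
rewrite Hp1 /form2 /phi /=.
by rewrite -scalemxAl mulmxBr trB -scalemxAr mxtraceZ.
Qed.

Lemma Zlem lam gam (x y u N : 'M[C]_n) :
  (lam *: x - y) *m u = u *m (lam *: x - y) ->
  (gam *: x - y) *m N = N *m (gam *: x - y) ->
  (lam = gam -> u *m N = N *m u) ->
  \tr ((y *m u - u *m y) *m N) = 0.
Proof.
move=> h1 h2 h3.
case: (eqVneq lam gam) => [e|ne].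
  rewrite mulmxBl trB -mulmxA (h3 e) mulmxA.
  by rewrite -[u *m y *m N]mulmxA [\tr (u *m _)]mxtrace_mulC subrr.
set Tx := \tr (x *m u *m N) - \tr (u *m x *m N).
set Ty := \tr (y *m u *m N) - \tr (u *m y *m N).
have e1 : gam * Tx - Ty = 0.
  have : \tr (((gam *: x - y) *m u - u *m (gam *: x - y)) *m N) = 0.
    rewrite mulmxBl trB -!mulmxA h2 [u *m (N *m _)]mulmxA.
    by rewrite [\tr (u *m N *m _)]mxtrace_mulC subrr.
  rewrite /Tx /Ty => <-.
  rewrite !mulmxBl !mulmxBr !mulmxBl -!scalemxAl -!scalemxAr -!scalemxAl !trB !mxtraceZ.
  cring.
have e2 : lam * Tx = Ty.
  rewrite /Tx /Ty -!trB -mulmxBl -mulmxBl -mxtraceZ scalemxAl.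
  by rewrite -(@K1c lam x y u h1) scalerBr scalemxAr scalemxAl.
have : (lam - gam) * Tx = 0.
  by rewrite mulrBl e2 -oppr0 -e1 opprB.
move/eqP; rewrite mulf_eq0 subr_eq0 (negPf ne) /= => /eqP Tx0.
rewrite mulmxBl trB -/Ty -e2 Tx0 mulr0 //.
Qed.

Lemma part1 i j lam gam (x y : 'M[C]_n) :
  QB (x, y) (lam *: (lam *: x - y) ^+ i, (lam *: x - y) ^+ i)
            (gam *: (gam *: x - y) ^+ j, (gam *: x - y) ^+ j) = 0.
Proof.
set s := lam *: x - y; set s' := gam *: x - y; set u := s ^+ i; set v := s' ^+ j.
have hsu : s *m u = u *m s := commrX i (commr_refl s).
have hsv : s' *m v = v *m s' := commrX j (commr_refl s').
have eu1 : s *m u = s ^+ i.+1 := esym (exprS s i).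
have eu2 : u *m s = s ^+ i.+1 := esym (exprSr s i).
have ev1 : s' *m v = s' ^+ j.+1 := esym (exprS s' j).
have ev2 : v *m s' = s' ^+ j.+1 := esym (exprSr s' j).
rewrite /QB !pcommE /padd /pmul; cbn [fst snd].
rewrite (@K1c lam x y u hsu) (@K1c gam x y v hsv) !form2_diag !anti.
rewrite -/s -/s' eu1 eu2 ev1 ev2.
have hw : GRing.comm s' (s' ^+ j.+1) := commrX j.+1 (commr_refl s').
have hw' : GRing.comm s (s ^+ i.+1) := commrX i.+1 (commr_refl s).
rewrite (@Zlem lam gam x y u (- (s' ^+ j.+1 + s' ^+ j.+1)) hsu (commrN (commrD hw hw))); last first.
  move=> e; rewrite /s' -e -/s.
  have h : GRing.comm (s ^+ i) (s ^+ j.+1) := commrX j.+1 (commr_sym (commrX i (commr_refl s))).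
  exact: (commrN (commrD h h)).
rewrite (@Zlem gam lam x y v (- (s ^+ i.+1 + s ^+ i.+1)) hsv (commrN (commrD hw' hw'))); last first.
  move=> e; rewrite /s -e -/s'.
  have h : GRing.comm (s' ^+ j) (s' ^+ i.+1) := commrX i.+1 (commr_sym (commrX j (commr_refl s'))).
  exact: (commrN (commrD h h)).
by rewrite mulr0 subrr.
Qed.

Ltac expand := repeat progress rewrite ?mulmxDl ?mulmxDr ?mulmxBl ?mulmxBr ?mulNmx ?mulmxN
  ?scalerDr ?scalerBr ?scaleNr ?scalerN ?scaleN1r ?mxtraceD ?trB ?trN ?mxtraceZ ?mulmxA
  -?scalemxAl -?scalemxAr.

Ltac hd t := lazymatch t with @mulmx _ _ _ _ ?A _ => hd A | _ => t end.
Ltac rot a b := repeat match goal with |- context [\tr (?A *m ?B)] =>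
   let h := hd A in
   lazymatch h with a => fail | b => fail | _ => rewrite [\tr (A *m B)]mxtrace_mulC ?mulmxA end end.

Lemma part2core lam (x y s u a1 a2 r : 'M[C]_n) :
  lam *: x - y = s -> s *m u = u *m s -> Rop (s *m u) = r ->
  QB (x, y) (a1, a2) (lam *: u, u) =
  form2 (pscale (-1) (pcomm (x, y) (r - s *m u, r + s *m u))) (a1, a2).
Proof.
move=> ey hsu hr.
have hPQ : x *m (lam *: u) + (lam *: u) *m x - (y *m u + u *m y) = s *m u + s *m u.
  by rewrite -opprB anti ey opprK -hsu.
rewrite /QB /pscale !pcommE /padd /pmul /calR; cbn [fst snd].
rewrite hPQ (RopD (s *m u)) hr.
have hK : (lam *: x - y) *m u = u *m (lam *: x - y) by rewrite ey.
rewrite (@K1c lam x y u hK) form2_diag.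
have ey' : y = lam *: x - s by rewrite -ey opprB addrC subrK.
subst y.
have hus' : forall A : 'M[C]_n, A *m u *m s = A *m s *m u by move=> A; rewrite -!mulmxA hsu.
rewrite -mulrBr; apply: half.
rewrite /form2; cbn [fst snd].
expand.
rot a1 a2.
rewrite ?hus'.
cring.
Qed.
End S.

Theorem proposition3p13 (C : numClosedFieldType) (n : nat) :
  (* (1) the functions P_i o phi_lambda pairwise Poisson commute *)
  (forall (i j : nat) (lam gam : C) (X : pt C n),
      QPB (fun Y => Pfun i (phi lam Y)) (fun Y => Pfun j (phi gam Y)) X 0)
  /\
  (* (2) X_F[K] = {K, F} with X_F given by Vfield, for all test functions K *)
  (forall (i : nat) (lam : C) (K : pt C n -> C) (X ZK : pt C n),
      is_grad K X ZK ->
      QPB K (fun Y => Pfun i (phi lam Y)) X (form2 (Vfield i lam X) ZK)).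
Proof.
split.
  move=> i j lam gam X.
  exists (lam *: (phi lam X) ^+ i, (phi lam X) ^+ i), (gam *: (phi gam X) ^+ j, (phi gam X) ^+ j).
  split; first exact: gradF.
  split; first exact: gradF.
  case: X => x y; by rewrite /phi /= part1.
move=> i lam K X ZK hK.
exists ZK, (lam *: (phi lam X) ^+ i, (phi lam X) ^+ i).
split => //; split; first exact: gradF.
case: X hK => x y hK; case: ZK hK => a1 a2 hK.
rewrite /phi /=.
rewrite (@part2core C n lam x y (lam *: x - y) ((lam *: x - y) ^+ i) a1 a2
            (Rop ((lam *: x - y) ^+ i.+1))) //.
- by rewrite /Vfield /phi /= exprS.
- exact: (commrX i (commr_refl (lam *: x - y))).
- by rewrite [in RHS]exprS.
Qed.
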